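(* Let $R$ be a commutative ring with unity. If $r\in R$ is B-irreducible, then $r$ is F-irreducible.
   Context: A non-zero, non-unit element $r\in R$ is called B-irreducible if the principal ideal $(r)$ is a maximal element, with respect to inclusion, of the set of all proper principal ideals of $R$. A factorization of $r$ is an expression $r=a_1\cdots a_n$ with $a_i\in R$; a refinement of this factorization is a factorization obtained by replacing one or more of the factors $a_i$ by a factorization of $a_i$. A non-unit element $r\in R$ is called F-irreducible if every factorization of $r$ has a refinement in which $r$ appears as one of the new factors. *)

(* Defs.v *)
From mathcomp Require Import all_boot all_algebra.
Set Implicit Arguments. Unset Strict Implicit. Unset Printing Implicit Defensive.
Import GRing.Theory.
Local Open Scope ring_scope.

Definition is_unit (R : comPzRingType) (x : R) : Prop := exists y : R, x * y = 1.

(* principal ideal inclusion: (a) ⊆ (b) iff a ∈ (b) iff a = b * c for some c *)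
Definition pideal_sub (R : comPzRingType) (a b : R) : Prop := exists c : R, a = b * c.

(* (r) is maximal among proper principal ideals; (s) is proper iff s is not a unit *)
Definition B_irreducible (R : comPzRingType) (r : R) : Prop :=
  r != 0 /\ ~ is_unit r /\
  forall s : R, ~ is_unit s -> pideal_sub r s -> pideal_sub s r.

Definition factorization (R : comPzRingType) (r : R) (s : seq R) : Prop :=
  \prod_(x <- s) x = r.

(* a refinement of the factorization s: each factor s_i is replaced by a
   factorization ts_i of s_i (the refined factorization is flatten ts);
   a factor left unchanged corresponds to ts_i = [:: s_i]. *)
Definition refinement (R : comPzRingType) (s : seq R) (ts : seq (seq R)) : Prop :=
  size ts = size s /\
  forall i, (i < size s)%N -> factorization (nth 0 s i) (nth [::] ts i).

(* every factorization has a refinement in which r is one of the new factors,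
   i.e. r occurs in the factorization substituted for some factor s_i *)
Definition F_irreducible (R : comPzRingType) (r : R) : Prop :=
  ~ is_unit r /\
  forall s : seq R, factorization r s ->
    exists ts : seq (seq R), refinement s ts /\
      exists i, (i < size s)%N /\ r \in nth [::] ts i.

(* Main.v *)
Require Import Defs.
From mathcomp Require Import all_boot all_algebra.
From Stdlib Require Import Classical.
Import GRing.Theory.
Local Open Scope ring_scope.

Lemma prod_units (R : comPzRingType) (s : seq R) :
  (forall i, (i < size s)%N -> is_unit (nth 0 s i)) -> is_unit (\prod_(x <- s) x).
Proof.
elim: s => [|x s IH] H; first by exists 1; rewrite big_nil mulr1.
rewrite big_cons.
have [y Hy] := H 0%N isT.
have [z Hz] : is_unit (\prod_(x <- s) x) by apply: IH => i Hi; exact: (H i.+1).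
exists (y * z). by rewrite mulrACA Hy Hz mulr1.
Qed.

Lemma prod_div (R : comPzRingType) (s : seq R) i :
  (i < size s)%N -> exists c, \prod_(x <- s) x = nth 0 s i * c.
Proof.
elim: s i => [|x s IH] [|i] //= Hi; rewrite big_cons.
  by exists (\prod_(x <- s) x).
have [c Hc] := IH i Hi. exists (x * c). by rewrite Hc mulrCA.
Qed.

Theorem mainTheorem3 (R : comPzRingType) (r : R) :
  B_irreducible r -> F_irreducible r.
Proof.
move=> [rn0 [rnu Hmax]]; split => // s Hs.
have [i [Hi Hnu]] : exists i, (i < size s)%N /\ ~ is_unit (nth 0 s i).
  apply: NNPP => Hn; apply: rnu; rewrite -Hs; apply: prod_units => i Hi.
  apply: NNPP => Hu; apply: Hn; by exists i.
have [c Hc] := @prod_div R s i Hi; rewrite Hs in Hc.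
have [d Hd] := Hmax _ Hnu (ex_intro _ c Hc).
exists (mkseq (fun j => if j == i then [:: r; d] else [:: nth 0 s j]) (size s)).
split.
  split; first by rewrite size_mkseq.
  move=> j Hj; rewrite nth_mkseq //; rewrite /factorization.
  case: eqP => [->|_]; rewrite !big_cons big_nil mulr1 //.
exists i; split => //; rewrite nth_mkseq // eqxx.
by rewrite in_cons eqxx.
Qed.
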